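(* Let $n$ be a positive integer and let $\widetilde\lambda:\widetilde C\to\widetilde C'$ be a morphism of $r$-perfect $\mathcal S$-complexes which is a height $n$ morphism (respectively a strong height $n$ morphism). Then there exists a height $0$ morphism (respectively a strong height $0$ morphism) $\widetilde\lambda':\Sigma^n\widetilde C\to\widetilde C'$ such that $\widetilde\lambda'\circ\widetilde\iota_n=\widetilde\lambda$.
   Context: Let $R$ be a commutative ring; graded modules are $\mathbb Z$-graded, $V[i]_j=V_{i+j}$, differentials have degree $-1$. An $\mathcal S$-complex over $R$ is a chain complex $(\widetilde C,\widetilde d)$ of finitely generated free graded $R$-modules with a graded decomposition $\widetilde C=C\oplus C[-1]\oplus\mathsf R$ in which $\widetilde d=\begin{pmatrix} d&0&0\\ v&-d&\delta_2\\ \delta_1&0&r\end{pmatrix}$. It is $r$-perfect if $\mathsf R$ is supported in even degrees (so $r=0$). A degree $k$ morphism $\widetilde C\to\widetilde C'$ is an $R$-linear map of degree $k$ of the form $\begin{pmatrix}\lambda&0&0\\ \mu&\lambda&\Delta_2\\ \Delta_1&0&\rho\end{pmatrix}$ with $\widetilde d'\widetilde\lambda=\widetilde\lambda\widetilde d$. For such a morphism between $r$-perfect complexes set $\tau_0=\rho$ and, for $i\ge0$, $\tau_{i+1}=\delta_1'v'^i\Delta_2+\Delta_1v^i\delta_2+\sum_{j=0}^{i-1}\delta_1'v'^j\mu v^{i-1-j}\delta_2:\mathsf R\to\mathsf R'$. A height $n$ morphism ($n\ge0$) is an even degree morphism between $r$-perfect $\mathcal S$-complexes with $\tau_j=0$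 for all $0\le j<n$; it is strong height $n$ if moreover $\tau_n$ is an isomorphism. For $r$-perfect $\widetilde C$ and $n\ge1$, $\Sigma^n\widetilde C$ is the $\mathcal S$-complex with irreducible part $C_{\Sigma^n}=C[-2n]\oplus\bigoplus_{i=0}^{n-1}\mathsf R[-2i-1]$ (summands ordered $C[-2n],\mathsf R[-1],\mathsf R[-3],\dots,\mathsf R[-2n+1]$), reducible part $\mathsf R$, and differential components: $d_{\Sigma^n}$ has first row $(d,-\delta_2,-v\delta_2,\dots,-v^{n-1}\delta_2)$ and all other rows zero; $v_{\Sigma^n}$ is the $(n+1)\times(n+1)$ matrix with $(1,1)$-entry $v$, $(2,1)$-entry $\delta_1$, $(k+1,k)$-entry the identity for $2\le k\le n$, all other entries zero; $(\delta_2)_{\Sigma^n}=(v^n\delta_2,0,\dots,0)^T$; $(\delta_1)_{\Sigma^n}=(0,\dots,0,1)$ (identity on the last summand); $r_{\Sigma^n}=0$. The morphism $\widetilde\iota_n:\widetilde C\to\Sigma^n\widetilde C$ has $\lambda$-component $(1,0,\dots,0)^T$ (identity onto $C[-2n]$), $\Delta_2$-component $(0,1,0,\dots,0)^T$ (identity onto $\mathsf R[-1]$), and all other components zero. *)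

(* Defs.v *)
(* Finitely generated free graded R-modules are modelled by a
   homogeneous basis: a module of rank m is given by the degree function
   'I_m -> int of its basis.  R-linear maps are matrices acting on column
   vectors (g \o f = g *m f); a map A is of degree k iff every nonzero entry
   A i j satisfies deg_target i = deg_source j + k.  Shifts: V[s] has basis
   degrees (deg - s), so V[-s] has degrees deg + s. *)
From HB Require Import structures.
From mathcomp Require Import all_boot all_order all_algebra.
Set Implicit Arguments. Unset Strict Implicit. Unset Printing Implicit Defensive.
Import Order.TTheory GRing.Theory Num.Theory.
Local Open Scope ring_scope.

Section SComplexes.
Variable R : comPzRingType.

Definition graded_hom (m n : nat) (dt : 'I_m -> int) (ds : 'I_n -> int)
  (k : int) (A : 'M[R]_(m, n)) : Prop :=
  forall i j, A i j != 0 -> dt i = ds j + k.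

(* Data of a (candidate) S-complex  C~ = C (+) C[-1] (+) R. *)
Record SData := MkSData {
  sm : nat;                 (* rank of C *)
  sp : nat;                 (* rank of the reducible part R *)
  sdegC : 'I_sm -> int;
  sdegR : 'I_sp -> int;
  sd : 'M[R]_sm;
  sv : 'M[R]_sm;            (* v : C -> C[-1] *)
  sdelta1 : 'M[R]_(sp, sm);
  sdelta2 : 'M[R]_(sm, sp); (* delta2 : R -> C[-1] *)
  sr : 'M[R]_sp
}.

Definition tot (C : SData) : nat := (sm C + sm C) + sp C.

Definition tdeg (C : SData) (i : 'I_(tot C)) : int :=
  match split i with
  | inl a => match split a with
             | inl x => sdegC x
             | inr x => sdegC x + 1
             end
  | inr y => sdegR y
  end.

(* the total differential  [[d,0,0],[v,-d,delta2],[delta1,0,r]] *)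
Definition tot_d (C : SData) : 'M[R]_(tot C) :=
  block_mx (block_mx (sd C) 0 (sv C) (- sd C)) (col_mx 0 (sdelta2 C))
           (row_mx (sdelta1 C) 0) (sr C).

Definition is_Scx (C : SData) : Prop :=
  graded_hom (@tdeg C) (@tdeg C) (-1) (tot_d C) /\ tot_d C *m tot_d C = 0.

Definition rperfect (C : SData) : Prop := forall j, (2 %| @sdegR C j)%Z.

(* Data of a (candidate) morphism [[lam,0,0],[mu,lam,D2],[D1,0,rho]] *)
Record SMor (C C' : SData) := MkSMor {
  mlam : 'M[R]_(sm C', sm C);
  mmu : 'M[R]_(sm C', sm C);
  mD1 : 'M[R]_(sp C', sm C);
  mD2 : 'M[R]_(sm C', sp C);
  mrho : 'M[R]_(sp C', sp C)
}.

Definition mor_tot (C C' : SData) (L : SMor C C') : 'M[R]_(tot C', tot C) :=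
  block_mx (block_mx (mlam L) 0 (mmu L) (mlam L)) (col_mx 0 (mD2 L))
           (row_mx (mD1 L) 0) (mrho L).

Definition is_Smor (C C' : SData) (k : int) (L : SMor C C') : Prop :=
  graded_hom (@tdeg C') (@tdeg C) k (mor_tot L) /\
  tot_d C' *m mor_tot L = mor_tot L *m tot_d C.

Definition mxpow (m : nat) (A : 'M[R]_m) (i : nat) : 'M[R]_m :=
  iter i (mulmx A) 1%:M.

Definition tau (C C' : SData) (L : SMor C C') (i : nat) : 'M[R]_(sp C', sp C) :=
  match i with
  | 0 => mrho L
  | i'.+1 =>
      sdelta1 C' *m mxpow (sv C') i' *m mD2 L
      + mD1 L *m mxpow (sv C) i' *m sdelta2 C
      + \sum_(j < i') (sdelta1 C' *m mxpow (sv C') j *m mmu L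
                        *m mxpow (sv C) (i' - 1 - j) *m sdelta2 C)
  end.

Definition mx_iso (m n : nat) (A : 'M[R]_(m, n)) : Prop :=
  exists B : 'M[R]_(n, m), B *m A = 1%:M /\ A *m B = 1%:M.

Definition height_mor (n : nat) (C C' : SData) (k : int) (L : SMor C C') : Prop :=
  [/\ rperfect C, rperfect C', is_Smor k L, (2 %| k)%Z &
      forall j, (j < n)%N -> tau L j = 0].

Definition strong_height_mor (n : nat) (C C' : SData) (k : int) (L : SMor C C')
  : Prop := height_mor n k L /\ mx_iso (tau L n).

Lemma blk_inn_lt (n p : nat) (k : 'I_(n * p)) : (k %% p < p)%N.
Proof.
have hp : (0 < p)%N.
  case: p k => [|p] k //; have := ltn_ord k; move: (nat_of_ord k) => x.
  by rewrite muln0.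
exact: ltn_pmod.
Qed.

(* index k of  (+)_{b<n} R[-2b-1]  (ordered by b) ~ block b = k/p, inner k%p *)
Definition blk (n p : nat) (k : 'I_(n * p)) : nat := (k %/ p)%N.
Definition inn (n p : nat) (k : 'I_(n * p)) : 'I_p := Ordinal (blk_inn_lt k).

Definition Sigma (n : nat) (C : SData) : SData :=
  let m := sm C in let p := sp C in
  {| sm := m + n * p;
     sp := p;
     sdegC := fun i => match split i with
                       | inl a => sdegC a + (2 * n)%:Z
                       | inr k => sdegR (inn k) + (2 * (n - blk k))%:Z - 1
                       end;
     sdegR := @sdegR C;
     sd := block_mx (sd C)
             (\matrix_(i < m, k < n * p)
                 (- (mxpow (sv C) (blk k) *m sdelta2 C) i (inn k)))
             0 0;
     sv := block_mx (sv C) 0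
             (\matrix_(k < n * p, i < m)
                 (if blk k == 0%N then sdelta1 C (inn k) i else 0))
             (\matrix_(k < n * p, l < n * p)
                 (if (blk k == (blk l).+1) && (inn k == inn l) then 1 else 0));
     sdelta2 := col_mx (mxpow (sv C) n *m sdelta2 C) 0;
     sdelta1 := row_mx 0 (\matrix_(j < p, k < n * p)
                 (if (blk k == n.-1) && (inn k == j) then 1 else 0));
     sr := 0 |}.

Definition iota_n (n : nat) (C : SData) : SMor C (Sigma n C) :=
  @MkSMor C (Sigma n C)
    (col_mx 1%:M 0)
    0
    0
    (col_mx 0 (\matrix_(k < n * sp C, j < sp C)
                 (if (blk k == 0%N) && (inn k == j) then 1 else 0)))
    0.

End SComplexes.

(* Main.v *)
Require Import Defs.
From HB Require Import structures.
From mathcomp Require Import all_boot all_order all_algebra zify.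
Set Implicit Arguments. Unset Strict Implicit. Unset Printing Implicit Defensive.
Import Order.TTheory GRing.Theory Num.Theory.
Local Open Scope ring_scope.

Lemma mkidx_lt n p b j : (b < n)%N -> (j < p)%N -> (b * p + j < n * p)%N.
Proof. move=> hb hj; nia. Qed.
Lemma blk_lt n p (k : 'I_(n * p)) : (k %/ p < n)%N.
Proof.
have := ltn_ord k; move: (nat_of_ord k) => x; clear k.
case: p => [|p]; first by rewrite muln0.
by move=> h; rewrite ltn_divLR.
Qed.

Section Gen.
Variable R : comPzRingType.
Notation graded := (@graded_hom R).

Definition shp m1 m2 p1 p2 (a1 a2 a3 : 'M[R]_(m1, m2)) (a4 : 'M[R]_(m1, p2))
  (a5 : 'M[R]_(p1, m2)) (a6 : 'M[R]_(p1, p2)) : 'M[R]_((m1 + m1) + p1, (m2 + m2) + p2) :=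
  block_mx (block_mx a1 0 a2 a3) (col_mx 0 a4) (row_mx a5 0) a6.

Lemma shp_mul m1 m2 m3 p1 p2 p3 (a1 a2 a3 : 'M[R]_(m1, m2)) (a4 : 'M[R]_(m1, p2))
  (a5 : 'M[R]_(p1, m2)) (a6 : 'M[R]_(p1, p2))
  (b1 b2 b3 : 'M[R]_(m2, m3)) (b4 : 'M[R]_(m2, p3))
  (b5 : 'M[R]_(p2, m3)) (b6 : 'M[R]_(p2, p3)) :
  shp a1 a2 a3 a4 a5 a6 *m shp b1 b2 b3 b4 b5 b6 =
  shp (a1 *m b1) (a2 *m b1 + a3 *m b2 + a4 *m b5) (a3 *m b3)
      (a3 *m b4 + a4 *m b6) (a5 *m b1 + a6 *m b5) (a6 *m b6).
Proof.
rewrite /shp mulmx_block !mulmx_block mul_col_row !mul_block_col mul_row_block.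
rewrite !mul_row_col !(mul0mx, mulmx0, addr0, add0r).
rewrite !mul_mx_row !mulmx0 !add_block_mx mul_col_mx mul0mx add_col_mx add_row_mx.
by rewrite !(addr0, add0r).
Qed.

Lemma shp_inj m1 m2 p1 p2 (a1 a2 a3 : 'M[R]_(m1, m2)) (a4 : 'M[R]_(m1, p2))
  (a5 : 'M[R]_(p1, m2)) (a6 : 'M[R]_(p1, p2)) b1 b2 b3 b4 b5 b6 :
  shp a1 a2 a3 a4 a5 a6 = shp b1 b2 b3 b4 b5 b6 ->
  [/\ a1 = b1, a2 = b2, a3 = b3, a4 = b4 & (a5 = b5 /\ a6 = b6)].
Proof.
rewrite /shp => /eq_block_mx [/eq_block_mx [-> _ -> ->] /eq_col_mx [_ ->]
  /eq_row_mx [-> _] ->]; by [].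
Qed.

Lemma shp0 m1 m2 p1 p2 : shp 0 0 0 0 0 0 = 0 :> 'M[R]_((m1 + m1) + p1, (m2 + m2) + p2).
Proof. by rewrite /shp col_mx0 row_mx0 !block_mx0. Qed.


Lemma split_lsh m n (i : 'I_m) : split (lshift n i) = inl i.
Proof. exact: (unsplitK (inl _ i)). Qed.
Lemma split_rsh m n (i : 'I_n) : split (rshift m i) = inr i.
Proof. exact: (unsplitK (inr _ i)). Qed.

Lemma graded_row m n1 n2 (dt : 'I_m -> int) (ds : 'I_(n1 + n2) -> int) k
  (A : 'M[R]_(m, n1)) (B : 'M[R]_(m, n2)) :
  graded dt (fun j => ds (lshift n2 j)) k A ->
  graded dt (fun j => ds (rshift n1 j)) k B -> graded dt ds k (row_mx A B).
Proof.
move=> hA hB i j; rewrite -(splitK j); case: (split j) => j' /=.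
  by rewrite row_mxEl => /hA.
by rewrite row_mxEr => /hB.
Qed.

Lemma graded_col m1 m2 n (dt : 'I_(m1 + m2) -> int) (ds : 'I_n -> int) k
  (A : 'M[R]_(m1, n)) (B : 'M[R]_(m2, n)) :
  graded (fun i => dt (lshift m2 i)) ds k A ->
  graded (fun i => dt (rshift m1 i)) ds k B -> graded dt ds k (col_mx A B).
Proof.
move=> hA hB i j; rewrite -(splitK i); case: (split i) => i' /=.
  by rewrite col_mxEu => /hA.
by rewrite col_mxEd => /hB.
Qed.

Lemma graded0 m n (dt : 'I_m -> int) (ds : 'I_n -> int) k : graded dt ds k 0.
Proof. by move=> i j; rewrite mxE eqxx. Qed.

Lemma graded_add m n (dt : 'I_m -> int) (ds : 'I_n -> int) k A B :
  graded dt ds k A -> graded dt ds k B -> graded dt ds k (A + B).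
Proof.
move=> hA hB i j; rewrite mxE; have [/hA //|] := boolP (A i j != 0); rewrite negbK => /eqP A0.
by rewrite A0 add0r => /hB.
Qed.

Lemma graded_opp m n (dt : 'I_m -> int) (ds : 'I_n -> int) k A :
  graded dt ds k A -> graded dt ds k (- A).
Proof. by move=> hA i j; rewrite mxE oppr_eq0 => /hA. Qed.

Lemma graded_mul m l n (dt : 'I_m -> int) (dm : 'I_l -> int) (ds : 'I_n -> int) k1 k2 A B :
  graded dt dm k1 A -> graded dm ds k2 B -> graded dt ds (k1 + k2) (A *m B).
Proof.
move=> hA hB i j h.
have /existsP [l' hl] : [exists l', A i l' * B l' j != 0].
  apply: contraR h => /existsPn H; rewrite mxE big1 // => l' _.
  by apply/eqP; have := H l'; rewrite negbK.
have hA' : A i l' != 0 by apply: contraNneq hl => ->; rewrite mul0r.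
have hB' : B l' j != 0 by apply: contraNneq hl => ->; rewrite mulr0.
by rewrite (hA _ _ hA') (hB _ _ hB') -addrA (addrC k2).
Qed.

Lemma graded_ext m n (dt dt' : 'I_m -> int) (ds ds' : 'I_n -> int) k k' A :
  graded dt ds k A -> (forall i j, dt i = ds j + k -> dt' i = ds' j + k') ->
  graded dt' ds' k' A.
Proof. by move=> hA H i j /hA /H. Qed.

Lemma graded1 n (d : 'I_n -> int) : graded d d 0 (1%:M).
Proof.
by move=> i j; rewrite mxE; case: (i =P j) => [-> _|]; [rewrite addr0 | rewrite eqxx].
Qed.

Lemma graded_pow n (d : 'I_n -> int) k (A : 'M[R]_n) i :
  graded d d k A -> graded d d (k * i%:Z) (mxpow A i).
Proof.
move=> hA; elim: i => [|i IH] /=.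
  by apply: graded_ext (graded1 d) _ => ? ? ->; rewrite mulr0.
apply: graded_ext (graded_mul hA IH) _ => ? ? ->.
congr (_ + _); rewrite intS mulrDr mulr1; by [].
Qed.

Lemma graded_odd0 m n (dt : 'I_m -> int) (ds : 'I_n -> int) k A :
  (forall i, (2 %| dt i)%Z) -> (forall j, (2 %| ds j)%Z) -> ~~ (2 %| k)%Z ->
  graded dt ds k A -> A = 0.
Proof.
move=> ht hs hk hA; apply/matrixP => i j; rewrite mxE.
apply/eqP; apply: contraNT hk => /hA E.
have := ht i; have := hs j; rewrite E.
move=> /dvdzP [a ha] /dvdzP [b hb]; apply/dvdzP; exists (b - a).
by rewrite mulrBl -ha -hb addrAC subrr add0r.
Qed.


Definition tdg m p (dC : 'I_m -> int) (dR : 'I_p -> int) (i : 'I_((m + m) + p)) : int :=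
  match split i with
  | inl a => match split a with
             | inl x => dC x
             | inr x => dC x + 1
             end
  | inr y => dR y
  end.

Lemma tdg_ll m p dC dR (x : 'I_m) : @tdg m p dC dR (lshift p (lshift m x)) = dC x.
Proof. by rewrite /tdg !split_lsh. Qed.
Lemma tdg_lr m p dC dR (x : 'I_m) : @tdg m p dC dR (lshift p (rshift m x)) = dC x + 1.
Proof. by rewrite /tdg split_lsh split_rsh. Qed.
Lemma tdg_r m p dC dR (x : 'I_p) : @tdg m p dC dR (rshift (m + m) x) = dR x.
Proof. by rewrite /tdg split_rsh. Qed.

Lemma graded_shp m1 m2 p1 p2 (dC1 : 'I_m1 -> int) (dR1 : 'I_p1 -> int)
  (dC2 : 'I_m2 -> int) (dR2 : 'I_p2 -> int) k
  (a1 a2 a3 : 'M[R]_(m1, m2)) (a4 : 'M[R]_(m1, p2))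
  (a5 : 'M[R]_(p1, m2)) (a6 : 'M[R]_(p1, p2)) :
  graded dC1 dC2 k a1 -> graded (fun i => dC1 i + 1) dC2 k a2 ->
  graded (fun i => dC1 i + 1) (fun j => dC2 j + 1) k a3 ->
  graded (fun i => dC1 i + 1) dR2 k a4 -> graded dR1 dC2 k a5 -> graded dR1 dR2 k a6 ->
  graded (tdg dC1 dR1) (tdg dC2 dR2) k (shp a1 a2 a3 a4 a5 a6).
Proof.
move=> h1 h2 h3 h4 h5 h6; rewrite /shp /block_mx.
apply: graded_col; apply: graded_row.
- apply: graded_col; apply: graded_row.
  + by move=> i j; rewrite tdg_ll tdg_ll; apply: h1.
  + by move=> i j; rewrite mxE eqxx.
  + by move=> i j; rewrite tdg_lr tdg_ll; apply: h2.
  + by move=> i j; rewrite tdg_lr tdg_lr; apply: h3.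
- apply: graded_col.
  + by move=> i j; rewrite mxE eqxx.
  + by move=> i j; rewrite tdg_lr tdg_r; apply: h4.
- apply: graded_row.
  + by move=> i j; rewrite tdg_r tdg_ll; apply: h5.
  + by move=> i j; rewrite mxE eqxx.
- by move=> i j; rewrite tdg_r tdg_r; apply: h6.
Qed.

Lemma shp_graded m1 m2 p1 p2 (dC1 : 'I_m1 -> int) (dR1 : 'I_p1 -> int)
  (dC2 : 'I_m2 -> int) (dR2 : 'I_p2 -> int) k
  (a1 a2 a3 : 'M[R]_(m1, m2)) (a4 : 'M[R]_(m1, p2))
  (a5 : 'M[R]_(p1, m2)) (a6 : 'M[R]_(p1, p2)) :
  graded (tdg dC1 dR1) (tdg dC2 dR2) k (shp a1 a2 a3 a4 a5 a6) ->
  [/\ graded dC1 dC2 k a1, graded (fun i => dC1 i + 1) dC2 k a2,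
   graded (fun i => dC1 i + 1) (fun j => dC2 j + 1) k a3,
   graded (fun i => dC1 i + 1) dR2 k a4 & graded dR1 dC2 k a5 /\ graded dR1 dR2 k a6].
Proof.
move=> H; split.
- move=> i j; have := H (lshift p1 (lshift m1 i)) (lshift p2 (lshift m2 j)).
  by rewrite /shp !block_mxEul tdg_ll tdg_ll.
- move=> i j; have := H (lshift p1 (rshift m1 i)) (lshift p2 (lshift m2 j)).
  by rewrite /shp !block_mxEul block_mxEdl tdg_lr tdg_ll.
- move=> i j; have := H (lshift p1 (rshift m1 i)) (lshift p2 (rshift m2 j)).
  by rewrite /shp !block_mxEul block_mxEdr tdg_lr tdg_lr.
- move=> i j; have := H (lshift p1 (rshift m1 i)) (rshift (m2 + m2) j).
  by rewrite /shp !block_mxEur col_mxEd tdg_lr tdg_r.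
- split.
  + move=> i j; have := H (rshift (m1 + m1) i) (lshift p2 (lshift m2 j)).
    by rewrite /shp !block_mxEdl row_mxEl tdg_r tdg_ll.
  + move=> i j; have := H (rshift (m1 + m1) i) (rshift (m2 + m2) j).
    by rewrite /shp !block_mxEdr tdg_r tdg_r.
Qed.


Section Blocks.
Variables (n p : nat).
Implicit Types (k : 'I_(n * p)).

Definition mkidx b (j : 'I_p) (hb : (b < n)%N) : 'I_(n * p) :=
  Ordinal (mkidx_lt hb (ltn_ord j)).

Lemma p_gt0 k : (0 < p)%N.
Proof.
have := ltn_ord k; move: (nat_of_ord k) => x h; rewrite lt0n; apply/eqP => p0.
by move: h; rewrite p0 muln0.
Qed.

Lemma blk_mk b j hb : blk (@mkidx b j hb) = b.
Proof.
rewrite /blk /= divnMDl; last exact: (p_gt0 (mkidx j hb)).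
by rewrite divn_small ?addn0.
Qed.

Lemma inn_mk b j hb : inn (@mkidx b j hb) = j.
Proof. by apply: val_inj; rewrite /= modnMDl modn_small. Qed.

Lemma blkn k : (blk k < n)%N.
Proof. exact: blk_lt. Qed.

Lemma mk_blk k : k = @mkidx (blk k) (inn k) (blkn k).
Proof. by apply: val_inj => /=; rewrite /blk -divn_eq. Qed.

Lemma sel_lt b (j : 'I_p) (hb : (b < n)%N) (g : 'I_(n * p) -> R) :
  \sum_(k < n * p) (if (blk k == b) && (inn k == j) then g k else 0) = g (mkidx j hb).
Proof.
rewrite (bigD1 (mkidx j hb)) //= blk_mk inn_mk !eqxx /= big1 ?addr0 //.
move=> k hk; case: ifP => // /andP [/eqP hb' /eqP hj']; exfalso.
move/eqP: hk; apply; apply: val_inj => /=.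
by rewrite (divn_eq k p) -hj' -hb'.
Qed.

Lemma sel_ge b (j : 'I_p) (hb : ~~ (b < n)%N) (g : 'I_(n * p) -> R) :
  \sum_(k < n * p) (if (blk k == b) && (inn k == j) then g k else 0) = 0.
Proof.
rewrite big1 // => k _; case: ifP => // /andP [/eqP hb' _].
by move: hb; rewrite -hb' blkn.
Qed.

Lemma selj (j0 : 'I_p) (g : 'I_p -> R) :
  \sum_(j < p) (if j0 == j then g j else 0) = g j0.
Proof.
rewrite (bigD1 j0) //= eqxx big1 ?addr0 // => j hj.
by case: eqP => // E; move: hj; rewrite E eqxx.
Qed.

Definition rowF a (F : nat -> 'M[R]_(a, p)) : 'M[R]_(a, n * p) :=
  \matrix_(i < a, k < n * p) F (blk k) i (inn k).

Definition E0 : 'M[R]_(n * p, p) :=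
  \matrix_(k < n * p, j < p) (if (blk k == 0%N) && (inn k == j) then 1 else 0).
Definition Sh : 'M[R]_(n * p) :=
  \matrix_(k < n * p, l < n * p)
     (if (blk k == (blk l).+1) && (inn k == inn l) then 1 else 0).
Definition EL : 'M[R]_(p, n * p) :=
  \matrix_(j < p, k < n * p) (if (blk k == n.-1) && (inn k == j) then 1 else 0).

Lemma eq_rowF a (F G : nat -> 'M[R]_(a, p)) :
  (forall b, (b < n)%N -> F b = G b) -> rowF F = rowF G.
Proof. by move=> H; apply/matrixP => i k; rewrite !mxE H // blkn. Qed.

Lemma rowF_add a (F G : nat -> 'M[R]_(a, p)) :
  rowF F + rowF G = rowF (fun b => F b + G b).
Proof. by apply/matrixP => i k; rewrite !mxE. Qed.

Lemma rowF_opp a (F : nat -> 'M[R]_(a, p)) : - rowF F = rowF (fun b => - F b).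
Proof. by apply/matrixP => i k; rewrite !mxE. Qed.

Lemma mul_rowF a c (A : 'M[R]_(c, a)) (F : nat -> 'M[R]_(a, p)) :
  A *m rowF F = rowF (fun b => A *m F b).
Proof. by apply/matrixP => i k; rewrite !mxE; apply: eq_bigr => l _; rewrite mxE. Qed.

Lemma rowF_E0 a (F : nat -> 'M[R]_(a, p)) : (0 < n)%N -> rowF F *m E0 = F 0%N.
Proof.
move=> hn; apply/matrixP => i j; rewrite !mxE.
rewrite (eq_bigr (fun k => if (blk k == 0%N) && (inn k == j) then F (blk k) i (inn k) else 0)).
  by rewrite (sel_lt j hn) blk_mk inn_mk.
by move=> k _; rewrite !mxE; case: ifP; rewrite ?mulr1 ?mulr0.
Qed.

Lemma rowF_Sh a (F : nat -> 'M[R]_(a, p)) :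
  rowF F *m Sh = rowF (fun b => if (b.+1 < n)%N then F b.+1 else 0).
Proof.
apply/matrixP => i l; rewrite !mxE.
rewrite (eq_bigr (fun k => if (blk k == (blk l).+1) && (inn k == inn l) then F (blk k) i (inn k) else 0)); last first.
  by move=> k _; rewrite !mxE; case: ifP; rewrite ?mulr1 ?mulr0.
case: (boolP ((blk l).+1 < n)%N) => h.
  by rewrite (sel_lt (inn l) h) blk_mk inn_mk.
by rewrite (sel_ge (inn l) h) mxE.
Qed.

Lemma mul_EL a (W : 'M[R]_(a, p)) :
  W *m EL = rowF (fun b => if b == n.-1 then W else 0).
Proof.
apply/matrixP => i k; rewrite !mxE.
rewrite (eq_bigr (fun j => if inn k == j then (if blk k == n.-1 then W i j else 0) else 0)).
  by rewrite selj; case: ifP => //; rewrite mxE.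
move=> j _; rewrite !mxE; case: (blk k == n.-1); case: (inn k == j);
  by rewrite ?mulr1 ?mulr0.
Qed.

Lemma E0_mul m (D : 'M[R]_(p, m)) :
  E0 *m D = \matrix_(k < n * p, i < m) (if blk k == 0%N then D (inn k) i else 0).
Proof.
apply/matrixP => k i; rewrite !mxE.
rewrite (eq_bigr (fun j => if inn k == j then (if blk k == 0%N then D j i else 0) else 0)).
  by rewrite selj.
move=> j _; rewrite !mxE; case: (blk k == 0%N); case: (inn k == j);
  by rewrite ?mul1r ?mul0r.
Qed.

End Blocks.

Lemma tot_dE (C : SData R) :
  tot_d C = shp (sd C) (sv C) (- sd C) (sdelta2 C) (sdelta1 C) (sr C).
Proof. by []. Qed.

Lemma mor_totE (C C' : SData R) (L : SMor C C') :
  mor_tot L = shp (mlam L) (mmu L) (mlam L) (mD2 L) (mD1 L) (mrho L).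
Proof. by []. Qed.

Lemma scx_grades (C : SData R) : is_Scx C ->
  [/\ graded (@sdegC R C) (@sdegC R C) (-1) (sd C),
      graded (@sdegC R C) (@sdegC R C) (-2) (sv C),
      graded (@sdegC R C) (@sdegR R C) (-2) (sdelta2 C),
      graded (@sdegR R C) (@sdegC R C) (-1) (sdelta1 C) &
      graded (@sdegR R C) (@sdegR R C) (-1) (sr C)].
Proof.
case=> /shp_graded [h1 h2 _ h4 [h5 h6]] _; split => //.
- by apply: graded_ext h2 _ => i j E; lia.
- by apply: graded_ext h4 _ => i j E; lia.
Qed.

Lemma scx_r (C : SData R) : is_Scx C -> rperfect C -> sr C = 0.
Proof.
move=> /scx_grades [_ _ _ _ h] hp; apply: graded_odd0 h => //.
Qed.

Lemma scx_eqs (C : SData R) : is_Scx C -> sr C = 0 ->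
  sd C *m sdelta2 C = 0 /\ sd C *m sv C = sv C *m sd C + sdelta2 C *m sdelta1 C.
Proof.
move=> [_ H] r0; move: H; rewrite tot_dE shp_mul -shp0 r0.
case/shp_inj => _ E2 _ E4 _; split.
  by move: E4; rewrite mulmx0 addr0 mulNmx => /eqP; rewrite oppr_eq0 => /eqP.
by move: E2; rewrite mulNmx => /eqP; rewrite addrAC addr_eq0 opprK => /eqP ->.
Qed.

Lemma mxpowS m (A : 'M[R]_m) i : mxpow A i.+1 = A *m mxpow A i.
Proof. by []. Qed.
Lemma mxpow0 m (A : 'M[R]_m) : mxpow A 0 = 1%:M.
Proof. by []. Qed.

Lemma scx_d1vd2 (C : SData R) : is_Scx C -> rperfect C -> forall j,
  sdelta1 C *m mxpow (sv C) j *m sdelta2 C = 0.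
Proof.
move=> /scx_grades [_ hv h2 h1 _] hp j.
have hp' := @graded_pow _ _ _ _ j hv.
apply: graded_odd0 (graded_mul (graded_mul h1 hp') h2) => //.
by apply/negP => /dvdzP [q hq]; lia.
Qed.

Lemma scx_dvd2 (C : SData R) : is_Scx C -> rperfect C -> forall j,
  sd C *m mxpow (sv C) j *m sdelta2 C = 0.
Proof.
move=> SC hp; have [hd hdv] := scx_eqs SC (scx_r SC hp).
elim=> [|j IH]; first by rewrite mxpow0 mulmx1.
have IH' : sd C *m (mxpow (sv C) j *m sdelta2 C) = 0 by rewrite mulmxA.
have h' : sdelta1 C *m (mxpow (sv C) j *m sdelta2 C) = 0.
  by rewrite mulmxA (scx_d1vd2 SC hp).
by rewrite mxpowS !mulmxA hdv mulmxDl mulmxDl -!mulmxA IH' h' !mulmx0 addr0.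
Qed.

Section Main.
Variables (n : nat) (C C' : SData R) (k : int) (L : SMor C C').
Hypotheses (hn : (0 < n)%N) (SC : is_Scx C) (SC' : is_Scx C').
Hypotheses (hpC : rperfect C) (hpC' : rperfect C') (HS : is_Smor k L)
  (hk : (2 %| k)%Z) (htau : forall j, (j < n)%N -> tau L j = 0).

Local Notation d := (sd C). Local Notation v := (sv C).
Local Notation d1 := (sdelta1 C). Local Notation d2 := (sdelta2 C).
Local Notation d' := (sd C'). Local Notation v' := (sv C').
Local Notation d1' := (sdelta1 C'). Local Notation d2' := (sdelta2 C').
Local Notation lam := (mlam L). Local Notation mu := (mmu L).
Local Notation D1 := (mD1 L). Local Notation D2 := (mD2 L).
Local Notation rho := (mrho L).

Lemma rho0 : rho = 0.
Proof. exact: (htau hn). Qed.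

Lemma r0 : sr C = 0. Proof. exact: scx_r. Qed.
Lemma r0' : sr C' = 0. Proof. exact: scx_r. Qed.

Lemma Leqs :
  [/\ d' *m lam = lam *m d,
      d' *m mu = v' *m lam + d2' *m D1 - (mu *m d + lam *m v + D2 *m d1),
      d' *m D2 = - (lam *m d2) &
      d1' *m lam = D1 *m d].
Proof.
have [_ E] := HS; move: E; rewrite tot_dE mor_totE !shp_mul r0 r0' rho0.
case/shp_inj => E1 E2 _ E4 [E5 _]; split => //.
- rewrite -E2 mulNmx; set a := v' *m lam; set b := d2' *m D1.
  by rewrite opprD opprB addrACA subrr addr0 addrC subrK.
- by move: E4; rewrite !mulmx0 !addr0 mulNmx => /eqP; rewrite eqr_oppLR => /eqP.
- by move: E5; rewrite !mul0mx !addr0.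
Qed.

Fixpoint xs (b : nat) : 'M[R]_(sm C', sp C) :=
  match b with
  | 0 => D2
  | b'.+1 => v' *m xs b' + mu *m mxpow v b' *m d2
  end.

Lemma xs_closed b : xs b = mxpow v' b *m D2 +
  \sum_(j < b) (mxpow v' j *m mu *m mxpow v (b - 1 - j) *m d2).
Proof.
elim: b => [|b IH]; first by rewrite big_ord0 addr0 mxpow0 mul1mx.
rewrite /= IH mulmxDr mulmx_sumr big_ord_recl /= mul1mx.
have -> : (b.+1 - 1 - 0 = b)%N by lia.
rewrite mulmxA -addrA; congr (_ + _); rewrite addrC; congr (_ + _).
apply: eq_bigr => j _; rewrite !mulmxA /bump /= add0n add1n.
by have -> : (b.+1 - 1 - j.+1 = b - 1 - j)%N by lia.
Qed.

Lemma tau_x b : tau L b.+1 = d1' *m xs b + D1 *m mxpow v b *m d2.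
Proof.
rewrite /= xs_closed mulmxDr mulmx_sumr mulmxA addrAC; congr (_ + _).
congr (_ + _); apply: eq_bigr => j _; by rewrite !mulmxA.
Qed.

Lemma dx_step b : d' *m xs b = - (lam *m mxpow v b *m d2) ->
  d' *m xs b.+1 = d2' *m tau L b.+1 - lam *m mxpow v b.+1 *m d2.
Proof.
move=> IH; have [E1 E2 E4 E5] := Leqs.
have [_ Hdv'] := scx_eqs SC' r0'.
have Z1 : d *m (mxpow v b *m d2) = 0 by rewrite mulmxA scx_dvd2.
have Z2 : d1 *m (mxpow v b *m d2) = 0 by rewrite mulmxA scx_d1vd2.
rewrite mxpowS [xs _.+1]/= mulmxDr mulmxA Hdv' mulmxDl -mulmxA IH.
rewrite !mulmxA E2 tau_x.
rewrite !(mulmxDl, mulmxDr, mulNmx, mulmxN) -!mulmxA Z1 Z2.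
rewrite !mulmx0 add0r addr0.
set A := v' *m _; set B := d2' *m (d1' *m _); set Cc := d2' *m (D1 *m _).
by rewrite -(addrA A) [- A + B]addrC -addrA addKr addrA.
Qed.

Lemma dx_lt b : (b < n)%N -> d' *m xs b = - (lam *m mxpow v b *m d2).
Proof.
have [E1 E2 E4 E5] := Leqs.
elim: b => [|b IH] hb; first by rewrite /= E4 mulmx1.
rewrite (dx_step (IH (ltnW hb))) (htau hb) mulmx0 sub0r.
by [].
Qed.

Lemma dx_n : d' *m xs n = d2' *m tau L n - lam *m mxpow v n *m d2.
Proof.
have [n' En] : exists n', n = n'.+1 by exists n.-1; rewrite prednK.
by rewrite En; apply: dx_step; apply: dx_lt; rewrite En.
Qed.

Lemma Lgrades :
  [/\ graded (@sdegC R C') (@sdegC R C) k lam,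
      graded (@sdegC R C') (@sdegC R C) (k - 1) mu,
      graded (@sdegC R C') (@sdegR R C) (k - 1) D2 &
      graded (@sdegR R C') (@sdegC R C) k D1].
Proof.
have [G _] := HS; move: G; rewrite mor_totE => /shp_graded [h1 h2 _ h4 [h5 _]].
split => //.
- by apply: graded_ext h2 _ => i j E; lia.
- by apply: graded_ext h4 _ => i j E; lia.
Qed.

Lemma xs_graded b :
  graded (@sdegC R C') (@sdegR R C) (k - (2 * b)%:Z - 1) (xs b).
Proof.
have [_ hmu hD2 _] := Lgrades.
have [_ hv _ _ _] := scx_grades SC.
have [_ hv' _ _ _] := scx_grades SC'.
have [_ _ hd2 _ _] := scx_grades SC.
elim: b => [|b IH] /=.
  by apply: graded_ext hD2 _ => i j E; lia.
apply: graded_add.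
  by apply: graded_ext (graded_mul hv' IH) _ => i j E; lia.
apply: graded_ext (graded_mul (graded_mul hmu (@graded_pow _ _ _ _ b hv)) hd2) _ => i j E.
lia.
Qed.

Lemma tau_graded :
  graded (@sdegR R C') (@sdegR R C) (k - (2 * n)%:Z) (tau L n).
Proof.
have [_ _ _ hD1] := Lgrades.
have [_ hv hd2 _ _] := scx_grades SC.
have [_ _ _ hd1' _] := scx_grades SC'.
have [n' En] : exists n', n = n'.+1 by exists n.-1; rewrite prednK.
rewrite En tau_x.
apply: graded_add.
  by apply: graded_ext (graded_mul hd1' (xs_graded (b:=n'))) _ => i j E; lia.
apply: graded_ext (graded_mul (graded_mul hD1 (@graded_pow _ _ _ _ n' hv)) hd2) _ => i j E.
lia.
Qed.

Definition Xm : 'M[R]_(sm C', n * sp C) := @rowF n (sp C) _ xs.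

Definition L' : SMor (Sigma n C) C' :=
  @MkSMor R (Sigma n C) C' (row_mx lam Xm) (row_mx mu 0) (row_mx D1 0) (xs n) (tau L n).

Definition DR := @rowF n (sp C) _ (fun b => - (mxpow v b *m d2)).

Lemma SigdE : sd (Sigma n C) = block_mx d DR 0 0.
Proof.
rewrite /=; congr block_mx; apply/matrixP => i j; by rewrite !mxE.
Qed.

Lemma SigvE : sv (Sigma n C) = block_mx v 0 (@E0 n (sp C) *m d1) (@Sh n (sp C)).
Proof. by rewrite E0_mul. Qed.

Lemma Sigd2E : sdelta2 (Sigma n C) = col_mx (mxpow v n *m d2) 0.
Proof. by []. Qed.
Lemma Sigd1E : sdelta1 (Sigma n C) = row_mx 0 (@EL n (sp C)).
Proof. by []. Qed.
Lemma SigrE : sr (Sigma n C) = 0.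
Proof. by []. Qed.

Lemma G1 : d' *m row_mx lam Xm = row_mx lam Xm *m sd (Sigma n C).
Proof.
have [E1 E2 E4 E5] := Leqs.
rewrite SigdE mul_mx_row mul_row_block !mulmx0 !addr0 E1; congr row_mx.
rewrite /Xm /DR !mul_rowF; apply: eq_rowF => b hb.
by rewrite dx_lt // mulmxN mulmxA.
Qed.

Lemma G2 : v' *m row_mx lam Xm + (- d') *m row_mx mu 0 + d2' *m row_mx D1 0 =
  row_mx mu 0 *m sd (Sigma n C) + row_mx lam Xm *m sv (Sigma n C)
  + xs n *m sdelta1 (Sigma n C).
Proof.
have [E1 E2 E4 E5] := Leqs.
rewrite SigdE SigvE Sigd1E !mul_mx_row !mul_row_block !(mulmx0, mul0mx, addr0, add0r).
rewrite !add_row_mx !(addr0, add0r); congr row_mx.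
  rewrite mulmxA /Xm (rowF_E0 _ hn) /= mulNmx E2.
  by rewrite !opprD !opprK !addrA addrN add0r (addrC _ (d2' *m D1)) !addrA addrN add0r.
rewrite /Xm /DR !mul_rowF rowF_Sh mul_EL !rowF_add; apply: eq_rowF => b hb.
case: ifP => h1.
  have -> : (b == n.-1) = false by apply/negbTE; lia.
  by rewrite addr0 /= mulmxN mulmxA addrC addrK.
have Eb : n = b.+1 by lia.
by rewrite Eb /= eqxx addr0 mulmxN mulmxA addrC addrK.
Qed.

Lemma G4 : (- d') *m xs n + d2' *m tau L n =
  row_mx lam Xm *m sdelta2 (Sigma n C) + xs n *m sr (Sigma n C).
Proof.
rewrite Sigd2E SigrE mul_row_col !mulmx0 !addr0 mulNmx dx_n mulmxA.
by rewrite opprB subrK.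
Qed.

Lemma G5 : d1' *m row_mx lam Xm + sr C' *m row_mx D1 0 =
  row_mx D1 0 *m sd (Sigma n C) + tau L n *m sdelta1 (Sigma n C).
Proof.
have [E1 E2 E4 E5] := Leqs.
rewrite r0' mul0mx addr0 SigdE Sigd1E mul_mx_row mul_row_block mul_mx_row.
rewrite !(mulmx0, mul0mx, addr0) add_row_mx addr0 E5; congr row_mx.
rewrite /Xm /DR !mul_rowF mul_EL rowF_add; apply: eq_rowF => b hb.
case: ifP => h1.
  have Eb : n = b.+1 by lia.
  by rewrite Eb tau_x mulmxN mulmxA addrC addrK.
have hb1 : (b.+1 < n)%N by move/eqP: h1; lia.
have := htau hb1; rewrite tau_x => /eqP; rewrite addr_eq0 => /eqP ->.
by rewrite addr0 mulmxN mulmxA.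
Qed.

Lemma L'comm : is_Smor (k - (2 * n)%:Z) L'.
Proof.
split; last first.
  rewrite tot_dE mor_totE !shp_mul; congr (shp _ _ _ _ _ _).
  - exact: G1.
  - exact: G2.
  - by rewrite mulNmx mulmxN; congr (- _); exact: G1.
  - exact: G4.
  - exact: G5.
  - by rewrite r0' SigrE mul0mx mulmx0.
have [hlam hmu hD2 hD1] := Lgrades.
rewrite mor_totE; apply: graded_shp.
- apply: graded_row => i j.
    by rewrite /= split_lsh /= => /hlam E; lia.
  rewrite /= split_rsh /= mxE => /xs_graded E; have := blkn j; lia.
- apply: graded_row => i j.
    by rewrite /= split_lsh /= => /hmu E; lia.
  by rewrite mxE eqxx.
- apply: graded_row => i j.
    by rewrite /= split_lsh /= => /hlam E; lia.
  rewrite /= split_rsh /= mxE => /xs_graded E; have := blkn j; lia.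
- by move=> i j /xs_graded E /=; lia.
- apply: graded_row => i j.
    by rewrite /= split_lsh /= => /hD1 E; lia.
  by rewrite mxE eqxx.
- exact: tau_graded.
Qed.

Lemma L'comp : mor_tot L' *m mor_tot (iota_n n C) = mor_tot L.
Proof.
rewrite !mor_totE shp_mul; congr (shp _ _ _ _ _ _) => /=.
- by rewrite mul_row_col mulmx1 mulmx0 addr0.
- by rewrite mul_row_col mulmx1 !mulmx0 !addr0.
- by rewrite mul_row_col mulmx1 mulmx0 addr0.
- by rewrite mul_row_col !mulmx0 add0r addr0 /Xm (rowF_E0 _ hn).
- by rewrite mul_row_col mulmx1 !mulmx0 !addr0.
- by rewrite mulmx0 rho0.
Qed.

End Main.
End Gen.

Unset Implicit Arguments.

Theorem proposition2p14 (R : comPzRingType) (n : nat) (C C' : SData R)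
  (k : int) (L : SMor C C') :
  (0 < n)%N -> is_Scx C -> is_Scx C' ->
  (height_mor n k L ->
     exists (k' : int) (L' : SMor (Sigma n C) C'),
       height_mor 0 k' L' /\ mor_tot L' *m mor_tot (iota_n n C) = mor_tot L) /\
  (strong_height_mor n k L ->
     exists (k' : int) (L' : SMor (Sigma n C) C'),
       strong_height_mor 0 k' L' /\ mor_tot L' *m mor_tot (iota_n n C) = mor_tot L).
Proof.
move=> hn SC SC'.
have main : height_mor n k L ->
  height_mor 0 (k - (2 * n)%:Z) (L' n L) /\
  mor_tot (L' n L) *m mor_tot (iota_n n C) = mor_tot L.
  case=> hpC hpC' HS hk htau; split; last exact: L'comp.
  split => //; first exact: L'comm.
  by move/dvdzP: hk => [q hq]; apply/dvdzP; exists (q - n%:Z); lia.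
split => [H|[H Hiso]]; exists (k - (2 * n)%:Z), (L' n L); have [h1 h2] := main H.
  by [].
by split => //; split.
Qed.
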